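(* Let $n\geq2$. As $E$-modules, $\tilde{H}^\ast(BSO(2n))\cong\tilde{H}^\ast(BSO(2n-1))\oplus\tilde{H}^\ast(MSO_{2n})$, where $MSO_{2n}$ is the Thom space of the universal oriented $2n$-plane bundle over $BSO(2n)$.
   Context: Cohomology is with $\mathbb{Z}/2$ coefficients. $E=\mathbb{Z}/2\langle Q_0,Q_1\rangle$ is the exterior subalgebra of the mod 2 Steenrod algebra generated by the Milnor primitives $Q_0=Sq^1$ and $Q_1=Sq^3+Sq^2Sq^1$, acting on cohomology via Steenrod operations. $H^\ast(BSO(m))=\mathbb{Z}/2[\widehat{\omega_2},\dots,\widehat{\omega_m}]$ with $\widehat{\omega_i}$ the Stiefel–Whitney classes. *)

(* Defs.v *)
From HB Require Import structures.
From mathcomp Require Import all_boot all_order all_algebra.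
From mathcomp Require Import finmap.
From mathcomp Require Import mpoly.
Unset Printing Implicit Defensive.
Import GRing.Theory.
Local Open Scope ring_scope.

Notation F2 := 'F_2.

(* Algebraic model of H^*(BSO(m); Z/2) = Z/2[w_2, ..., w_m]:
   a polynomial ring in m-1 variables, variable i : 'I_(m.-1) standing
   for the Stiefel-Whitney class w_(i+2) (of cohomological degree i+2). *)
Definition HBSO (m : nat) := {mpoly F2[m.-1]}.

Definition sw (m j : nat) : {mpoly F2[m.-1]} :=
  if j == 0%N then 1
  else if j == 1%N then 0
  else oapp (fun i : 'I_(m.-1) => 'X_i) 0 (insub (j - 2)%N : option 'I_(m.-1)).

(* Wu formula: for k <= j,
   Sq^k w_j = \sum_(t=0..k) C(j-k+t-1, t) w_(k-t) w_(j+t), and Sq^k w_j = 0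
   for k > j.  The total square of w_j, as a polynomial in a formal
   variable T: Sq_T(w_j) = \sum_k Sq^k(w_j) T^k. *)
Definition wu (m j k : nat) : {mpoly F2[m.-1]} :=
  \sum_(t < k.+1) ('C(j - k + t - 1, t))%:R * sw m (k - t) * sw m (j + t).

Definition sqT_gen (m : nat) (i : 'I_(m.-1)) : {poly {mpoly F2[m.-1]}} :=
  \sum_(k < (i + 2).+1) (wu m (i + 2) k)%:P * 'X^k.

(* The total Steenrod square Sq_T = \sum_k T^k Sq^k : H^*(BSO(m)) ->
   H^*(BSO(m))[T], the unique ring morphism (Cartan formula, Sq^0 = id)
   extending the Wu formula on the generators. *)
Definition SqT (m : nat) (p : {mpoly F2[m.-1]}) : {poly {mpoly F2[m.-1]}} :=
  mmap (fun c : F2 => (c%:MP)%:P) (@sqT_gen m) p.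

Definition Sq (m k : nat) (p : {mpoly F2[m.-1]}) : {mpoly F2[m.-1]} :=
  (SqT m p)`_k.

Definition Q0 (m : nat) (p : {mpoly F2[m.-1]}) := Sq m 1 p.
Definition Q1 (m : nat) (p : {mpoly F2[m.-1]}) := Sq m 3 p + Sq m 2 (Sq m 1 p).

(* Reduced cohomology of MSO_m (Thom space of the universal oriented
   m-plane bundle): by the Thom isomorphism it is the free
   H^*(BSO(m))-module on the Thom class U (of degree m); an element x of
   {mpoly F2[m.-1]} represents U.x.  Steenrod squares are determined by
   Sq(U) = w U (Thom's definition of w) and the Cartan formula:
   Sq_T(U.x) = U.(w_T * Sq_T(x)), w_T = \sum_i w_i T^i. *)
Definition wT (m : nat) : {poly {mpoly F2[m.-1]}} :=
  \sum_(i < m.+1) (sw m i)%:P * 'X^i.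

Definition SqThom (m k : nat) (x : {mpoly F2[m.-1]}) : {mpoly F2[m.-1]} :=
  (wT m * SqT m x)`_k.

Definition Q0Thom (m : nat) (x : {mpoly F2[m.-1]}) := SqThom m 1 x.
Definition Q1Thom (m : nat) (x : {mpoly F2[m.-1]}) :=
  SqThom m 3 x + SqThom m 2 (SqThom m 1 x).

Definition wdeg (m : nat) (mono : 'X_{1..m.-1}) : nat :=
  (\sum_(i < m.-1) (i + 2) * mono i)%N.

Definition homogBSO (m d : nat) (p : {mpoly F2[m.-1]}) : Prop :=
  forall mono, mono \in msupp p -> wdeg m mono = d.

Definition homogThom (m d : nat) (x : {mpoly F2[m.-1]}) : Prop :=
  forall mono, mono \in msupp x -> (m + wdeg m mono)%N = d.

Definition reducedBSO (m : nat) (p : {mpoly F2[m.-1]}) : Prop :=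
  p@_0%MM = 0.

(* Main.v *)
Require Import Defs.
From HB Require Import structures.
From mathcomp Require Import all_boot all_order all_algebra.
From mathcomp Require Import finmap.
From mathcomp Require Import mpoly.
From mathcomp Require Import ring zify.
Import GRing.Theory.
Local Open Scope ring_scope.

Lemma natF2 k : (k%:R : F2) = (odd k)%:R.
Proof. by rewrite -(Fp_nat_mod (erefl : prime 2)) modn2. Qed.
Lemma two0 : (2%:R : F2) = 0.
Proof. by rewrite natF2. Qed.
Lemma char2 (k : nat) (x : {mpoly F2[k]}) : x + x = 0.
Proof. by rewrite -mulr2n -mulr_natl -mpolyC_nat two0 mpolyC0 mul0r. Qed.
Lemma natM2 (k j : nat) : ~~ odd j -> (j%:R : {mpoly F2[k]}) = 0.
Proof. by move=> hj; rewrite -mpolyC_nat natF2 (negbTE hj) mpolyC0. Qed.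

Definition Sl := locked Sq.
Lemma SlE m k x : Sq m k x = Sl m k x.
Proof. by rewrite /Sl -lock. Qed.

Section Sq.
Variable m : nat.
Local Notation R := {mpoly F2[m.-1]}.

Lemma SqTM (a b : R) : SqT m (a * b) = SqT m a * SqT m b.
Proof. exact: (rmorphM (mmap (polyC \o @mpolyC _ F2) (@sqT_gen m))). Qed.
Lemma SqTD (a b : R) : SqT m (a + b) = SqT m a + SqT m b.
Proof. exact: (rmorphD (mmap (polyC \o @mpolyC _ F2) (@sqT_gen m))). Qed.
Lemma SqTC (c : F2) : SqT m c%:MP = (c%:MP)%:P.
Proof. exact: (mmapC (@sqT_gen m) (polyC \o @mpolyC _ F2)). Qed.
Lemma SqTX (i : 'I_(m.-1)) : SqT m 'X_i = sqT_gen m i.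
Proof. by change (mmap (polyC \o @mpolyC _ F2) (@sqT_gen m) 'X_i = sqT_gen m i); rewrite mmapX mmap1U. Qed.

Lemma SqD k (a b : R) : Sl m k (a + b) = Sl m k a + Sl m k b.
Proof. by rewrite -!SlE /Sq SqTD coefD. Qed.
Lemma Sq0p k : Sl m k (0 : R) = 0.
Proof. by rewrite -!SlE /Sq -mpolyC0 SqTC mpolyC0 coef0. Qed.
Lemma SqMn k (a : R) j : Sl m k (a *+ j) = Sl m k a *+ j.
Proof. by elim: j => [|j IH]; rewrite ?mulr0n ?Sq0p // !mulrS SqD IH. Qed.
Lemma SqNat k (a : R) j : Sl m k (j%:R * a) = j%:R * Sl m k a.
Proof. by rewrite !mulr_natl SqMn. Qed.
Lemma SqC k (c : F2) : Sl m k (c%:MP : R) = if k == 0%N then c%:MP else 0.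
Proof. by rewrite -!SlE /Sq SqTC coefC. Qed.
Lemma SqM k (a b : R) : Sl m k (a * b) = \sum_(i < k.+1) Sl m i a * Sl m (k - i) b.
Proof. by rewrite -SlE /Sq SqTM coefM; apply: eq_bigr => i _; rewrite -!SlE. Qed.
Lemma SqX k (i : 'I_(m.-1)) : Sl m k ('X_i : R) = if (k <= i + 2)%N then wu m (i + 2) k else 0.
Proof.
rewrite -!SlE /Sq SqTX /sqT_gen coef_sum.
under eq_bigr do rewrite coefCM coefXn.
case: leqP => hk.
  rewrite (bigD1 (Ordinal (hk : (k < (i+2).+1)%N))) //= eqxx mulr1 big1 ?addr0 //.
  move=> j hj; case: eqP => [e|]; rewrite ?mulr0 //.
  have ej : j = Ordinal (hk : (k < (i+2).+1)%N) by apply: val_inj; rewrite /= e.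
  by rewrite ej eqxx in hj.
by rewrite big1 // => j _; case: eqP => [hj|]; rewrite ?mulr0 //; move: (ltn_ord j); rewrite -hj ltnS leqNgt hk.
Qed.

Lemma swX (i : 'I_(m.-1)) : sw m (i + 2) = 'X_i.
Proof.
rewrite /sw addn2 /= subn2 /=.
by rewrite insubT //= => h; congr 'X__; apply: val_inj.
Qed.

Lemma sw_big j : (m.-1 + 2 <= j)%N -> sw m j = 0.
Proof.
move=> hj; rewrite /sw.
case: eqP => [e|_]; first by exfalso; move: hj; rewrite e; lia.
case: eqP => [e|_]; first by [].
rewrite insubF //; apply/negbTE; rewrite -leqNgt; lia.
Qed.

Lemma sw0 : sw m 0 = 1. Proof. by []. Qed.
Lemma sw1 : sw m 1 = 0. Proof. by []. Qed.

Lemma wu_big j k : (m.-1 + 2 <= j)%N -> wu m j k = 0.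
Proof.
move=> hj; rewrite /wu big1 // => t _.
by rewrite (@sw_big (j + t)) ?mulr0 //; apply: leq_trans hj _; rewrite leq_addr.
Qed.

Lemma Sq_sw k j : (2 <= j)%N -> Sl m k (sw m j) = if (k <= j)%N then wu m j k else 0.
Proof.
move=> hj.
case: (ltnP (j - 2) m.-1) => hl.
  have -> : j = ((Ordinal hl : nat) + 2)%N by rewrite /= subnK.
  by rewrite swX SqX.
rewrite sw_big ?Sq0p; last by lia.
by case: ifP => // _; rewrite wu_big //; lia.
Qed.

End Sq.


Lemma mp_closure (k : nat) (P : {mpoly F2[k]} -> Prop) :
 (forall c, P c%:MP) -> (forall i, P 'X_i) -> (forall a b, P a -> P b -> P (a + b)) ->
 (forall a b, P a -> P b -> P (a * b)) -> forall x, P x.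
Proof.
move=> hC hX hD hM; elim/mpolyind => [|c mo p _ _ IH]; first by rewrite -mpolyC0.
apply: (hD) => //; rewrite -mul_mpolyC mpolyXE_id; apply: (hM) => //.
apply: (big_ind P) => //; first by rewrite -mpolyC1.
move=> i _; elim: (mo i) => [|e IHe]; first by rewrite expr0 -mpolyC1.
by rewrite exprS; apply: (hM).
Qed.

Section Sq2.
Variable m : nat.
Local Notation R := {mpoly F2[m.-1]}.

Lemma wu0 j : wu m j 0 = sw m j.
Proof. by rewrite /wu big_ord_recl big_ord0 /= bin0 mul1r sw0 mul1r addn0 addr0. Qed.

Lemma wu1 j : (2 <= j)%N -> wu m j 1 = (j-1)%:R * sw m (j+1).
Proof.
move=> hj; rewrite /wu !big_ord_recl big_ord0 /= /bump /=.
rewrite bin0 bin1 sw1 sw0 !mulr0 !mul0r add0r addr0 mulr1.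
by have -> : (j - 1 + 1 - 1 = j - 1)%N by lia.
Qed.

Lemma wu2 j : (2 <= j)%N -> wu m j 2 = sw m 2 * sw m j + ('C(j-1,2))%:R * sw m (j+2).
Proof.
move=> hj; rewrite /wu !big_ord_recl big_ord0 /= /bump /=.
rewrite bin0 sw1 sw0 !mulr0 !mul0r addr0 mulr1 mul1r addn0 add0r.
by have -> : (j - 2 + 2 - 1 = j - 1)%N by lia.
Qed.

Lemma wu3 j : (3 <= j)%N -> wu m j 3 = sw m 3 * sw m j + (j-3)%:R * sw m 2 * sw m (j+1)
   + ('C(j-1,3))%:R * sw m (j+3).
Proof.
move=> hj; rewrite /wu !big_ord_recl big_ord0 /= /bump /=.
rewrite bin0 bin1 sw1 sw0 !mulr0 !mul0r addr0 mulr1 mul1r addn0 add0r.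
have -> : (j - 3 + 3 - 1 = j - 1)%N by lia.
rewrite !addn0 !add1n subn0 addrA. have -> : (j - 3 + 1 - 1 = j - 3)%N by lia. by [].
Qed.


Lemma SqCS k (c : F2) : Sl m k.+1 (c%:MP : R) = 0.
Proof. by rewrite SqC. Qed.

Lemma Sq0_id (x : R) : Sl m 0 x = x.
Proof.
elim/mp_closure: x => [c|i|a b ha hb|a b ha hb].
- by rewrite SqC.
- by rewrite SqX leq0n wu0 swX.
- by rewrite SqD ha hb.
- by rewrite SqM big_ord_recl big_ord0 addr0 /= ha hb.
Qed.

Lemma Sq1M (a b : R) : Sl m 1 (a * b) = Sl m 1 a * b + a * Sl m 1 b.
Proof. by rewrite SqM !big_ord_recl big_ord0 addr0 /= !Sq0_id addrC. Qed.

Lemma Sq1_sw j : (2 <= j)%N -> Sl m 1 (sw m j) = (j-1)%:R * sw m (j+1).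
Proof. by move=> hj; rewrite Sq_sw // ifT ?wu1 //; lia. Qed.
Lemma Sq2_sw j : (2 <= j)%N -> Sl m 2 (sw m j) = sw m 2 * sw m j + ('C(j-1,2))%:R * sw m (j+2).
Proof. by move=> hj; rewrite Sq_sw // ifT ?wu2 //. Qed.
Lemma Sq3_sw j : (3 <= j)%N -> Sl m 3 (sw m j) = sw m 3 * sw m j + (j-3)%:R * sw m 2 * sw m (j+1)
   + ('C(j-1,3))%:R * sw m (j+3).
Proof. by move=> hj; rewrite Sq_sw ?ifT ?wu3 //; lia. Qed.
Lemma Sq3_sw2 : Sl m 3 (sw m 2) = 0.
Proof. by rewrite Sq_sw. Qed.

Lemma Sq11 (x : R) : Sl m 1 (Sl m 1 x) = 0.
Proof.
elim/mp_closure: x => [c|i|a b ha hb|a b ha hb].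
- by rewrite SqCS Sq0p.
- rewrite -swX Sq1_sw ?leq_addl // SqNat Sq1_sw; last by lia.
  rewrite mulrA -natrM natM2 ?mul0r //.
  have -> : (i + 2 - 1 = i + 1)%N by lia.
  have -> : (i + 2 + 1 - 1 = i + 2)%N by lia.
  by rewrite oddM !oddD /=; case: (odd i).
- by rewrite !SqD ha hb addr0.
- rewrite !Sq1M !SqD !Sq1M ha hb !mulr0 !mul0r addr0 add0r.
  by rewrite char2.
Qed.

Definition Q1l (x : R) := Sl m 3 x + Sl m 2 (Sl m 1 x).
Lemma Q1M (a b : R) : Q1l (a * b) = Q1l a * b + a * Q1l b.
Proof.
rewrite /Q1l Sq1M SqD !SqM !big_ord_recl big_ord0 /= /bump /=.
rewrite !Sq0_id !Sq11 !addr0 !subn0 !add1n.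
set A1 := Sl m 1 a; set A2 := Sl m 2 a; set A3 := Sl m 3 a; set A21 := Sl m 2 A1.
set B1 := Sl m 1 b; set B2 := Sl m 2 b; set B3 := Sl m 3 b; set B21 := Sl m 2 B1.
rewrite !big_ord0 !mul0r !mulr0 !addr0 ?add0r.
transitivity ((A3 + A21) * b + a * (B3 + B21) + ((A2 * B1 + A2 * B1) + (A1 * B2 + A1 * B2))).
  ring.
by rewrite !char2 !addr0.
Qed.

Definition cQ j := ('C(j-1,3) + (j-1) * 'C(j,2))%N.

Lemma Q1_sw j : (2 <= j)%N -> Q1l (sw m j) = sw m 3 * sw m j + (cQ j)%:R * sw m (j+3).
Proof.
move=> hj; rewrite /Q1l Sq1_sw // SqNat Sq2_sw; last by lia.
have -> : (j + 1 - 1 = j)%N by lia.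
have -> : (j + 1 + 2 = j + 3)%N by lia.
case: (ltnP 2 j) => h3.
  rewrite Sq3_sw // /cQ natrD natrM.
  have E : ((j - 3)%:R : R) = (j - 1)%:R.
    have -> : (j - 1 = (j - 3) + 2)%N by lia.
    by rewrite natrD (@natM2 _ 2) // addr0.
  rewrite E.
  set t := (j - 1)%:R * sw m 2 * sw m (j + 1).
  transitivity (sw m 3 * sw m j + ((j - 1)%:R * 'C(j, 2)%:R + 'C(j - 1, 3)%:R) * sw m (j + 3) + (t + t)).
    rewrite /t; ring.
  by rewrite char2 addr0 (addrC (_ * 'C(j, 2)%:R)).
have -> : j = 2%N by lia.
rewrite Sq3_sw2 add0r.
have -> : cQ 2 = 1%N by [].
have -> : (2 - 1 = 1)%N by [].
have -> : 'C(2, 2) = 1%N by [].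
rewrite !mul1r; ring.
Qed.

End Sq2.


Lemma binC3even a : ~~ odd a -> ~~ odd 'C(a, 3).
Proof.
move=> ha; have [b ->] : exists b, a = b.*2.
  by exists a./2; rewrite -{1}(odd_double_half a) (negbTE ha).
elim: b => [|b IH] //.
have -> : (b.+1).*2 = (b.*2).+2 by rewrite doubleS.
rewrite !binS !oddD bin1 odd_double (negbTE IH).
by case: (odd 'C(b.*2, 2)).
Qed.

Lemma Q1lD m (a b : {mpoly F2[m.-1]}) : Q1l m (a + b) = Q1l m a + Q1l m b.
Proof. by rewrite /Q1l !SqD addrACA. Qed.

Lemma mwiden_nat n k : mwiden (k%:R : {mpoly F2[n]}) = k%:R.
Proof. by rewrite -mpolyC_nat mwidenC mpolyC_nat. Qed.

Section Widen.
Variable p : nat.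
Hypothesis hp : ~~ odd p.
Hypothesis hp2 : (2 <= p)%N.

Lemma mwiden_sw j : j != p.+2 -> mwiden (sw p.+1 j) = sw p.+2 j.
Proof.
move=> hj.
case: (ltnP j 2) => hj2.
  case: j hj hj2 => [|[|j]] // _ _; first by rewrite !sw0 mwiden1.
  by rewrite !sw1 mwiden0.
case: (ltnP (j - 2) p) => hl.
  have -> : j = ((Ordinal hl : nat) + 2)%N by rewrite /= subnK.
  rewrite (swX p.+1 (Ordinal hl)) mwidenX mnmwiden1.
  exact: (esym (swX p.+2 (widen_ord (leqnSn p) (Ordinal hl)))).
rewrite !sw_big ?mwiden0 //=; lia.
Qed.

Lemma mwidenQ0 (y : {mpoly F2[p]}) : Sl p.+2 1 (mwiden y) = mwiden (Sl p.+1 1 y).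
Proof.
elim/mp_closure: y => [c|i|a b ha hb|a b ha hb].
- by rewrite mwidenC !SqCS mwiden0.
- rewrite -(swX p.+1 i) mwiden_sw; last by case: i => k hk /=; apply/eqP; lia.
  rewrite !Sq1_sw ?leq_addl // rmorphM /= rmorph_nat.
  have [e|ne] := eqVneq (i + 2 + 1)%N p.+2.
    have -> : (i + 2 - 1 = p)%N by lia.
    by rewrite !natM2 // !mul0r.
  by rewrite mwiden_sw.
- rewrite mwidenD !SqD mwidenD. by rewrite -ha -hb.
- rewrite mwidenM !Sq1M mwidenD !mwidenM. by rewrite -ha -hb.
Qed.


Lemma mwidenQ1 (y : {mpoly F2[p]}) : Q1l p.+2 (mwiden y) = mwiden (Q1l p.+1 y).
Proof.
elim/mp_closure: y => [c|i|a b ha hb|a b ha hb].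
- by rewrite mwidenC /Q1l !SqCS ?Sq0p ?addr0 mwiden0.
- rewrite -(swX p.+1 i) mwiden_sw; last by case: i => k hk /=; apply/eqP; lia.
  have hi : (i < p)%N by case: i => k hk.
  rewrite !Q1_sw ?leq_addl // mwidenD !mwidenM mwiden_nat.
  rewrite (mwiden_sw 3); last by apply/eqP; lia.
  rewrite (mwiden_sw (i + 2)%N); last by apply/eqP; lia.
  have [e|ne] := eqVneq (i + 2 + 3)%N p.+2; last by rewrite mwiden_sw.
  rewrite natM2 ?mul0r //.
  have -> : (i + 2 = (p - 2) + 1)%N by lia.
  rewrite /cQ addnK oddD oddM !negb_add.
  have he : ~~ odd (p - 2) by rewrite oddB ?(negbTE hp) //.
  by rewrite (negbTE (binC3even _ he)) (negbTE he).
- by rewrite mwidenD !Q1lD mwidenD -ha -hb.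
- by rewrite mwidenM !Q1M mwidenD !mwidenM -ha -hb.
Qed.

End Widen.


Lemma wu_top m k : (1 <= m)%N -> (k <= m)%N -> wu m m k = sw m k * sw m m.
Proof.
move=> h1 hk; rewrite /wu big_ord_recl /= bin0 mul1r subn0 addn0 big1 ?addr0 // => t _.
rewrite /bump /= (@sw_big m (m + (1 + t))) ?mulr0 //; lia.
Qed.

Lemma SqT_top p : SqT p.+2 ('X_(ord_max : 'I_p.+1)) = ('X_ord_max)%:P * wT p.+2.
Proof.
have hs : sw p.+2 p.+2 = 'X_(ord_max : 'I_p.+1) by rewrite -(swX p.+2 ord_max) /= addn2.
rewrite SqTX /sqT_gen /wT /= addn2 mulr_sumr; apply: eq_bigr => k _.
rewrite (@wu_top p.+2 k (ltn0Sn _) (ltn_ord k)) [sw p.+2 p.+2]hs polyCM.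
by rewrite [RHS]mulrA (mulrC ('X_ord_max)%:P).
Qed.

Lemma Sl_top p k (z : {mpoly F2[p.+1]}) : Sl p.+2 k ('X_ord_max * z) = 'X_ord_max * SqThom p.+2 k z.
Proof. by rewrite -SlE /Sq SqTM SqT_top -mulrA coefCM. Qed.

Section Decomp.
Variable p : nat.
Local Notation R := {mpoly F2[p.+1]}.
Local Notation R' := {mpoly F2[p]}.
Local Notation top := (ord_max : 'I_p.+1).

Definition gmap (yz : R' * R) : R := mwiden yz.1 + 'X_top * yz.2.

Lemma coef_mwiden_top (y : R') (mo : 'X_{1..p.+1}) : mo top != 0%N -> (mwiden y)@_mo = 0.
Proof.
move=> h; rewrite (mwidenE (k := msize y)) // raddf_sum /= big1 // => m' _.
rewrite mcoeffZ mcoeffX; case: eqP => [e|]; last by rewrite mulr0.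
by move: h; rewrite -e mnmwiden_ordmax.
Qed.

Lemma coef_Xtop_widen (z : R) (mo : 'X_{1..p}) : ('X_top * z)@_(mnmwiden mo) = 0.
Proof.
apply/eqP; rewrite mcoeff_eq0 mulrC.
rewrite (perm_mem (msuppMX z U_(top))); apply/negP => /mapP [m' _ e].
by move: (congr1 (fun mm : 'X_{1..p.+1} => mm top) e); rewrite mnmwiden_ordmax mnmDE mnm1E eqxx.
Qed.

Lemma gmap_coef1 yz (mo : 'X_{1..p}) : (gmap yz)@_(mnmwiden mo) = yz.1@_mo.
Proof. by rewrite /gmap mcoeffD mwiden_mnmwiden coef_Xtop_widen addr0. Qed.

Lemma gmap_coef2 yz (mo : 'X_{1..p.+1}) : (gmap yz)@_(U_(top) + mo)%MM = yz.2@_mo.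
Proof.
rewrite /gmap mcoeffD coef_mwiden_top ?add0r; last by rewrite mnmDE mnm1E eqxx.
by rewrite mulrC mcoeffMX.
Qed.

Lemma gmap_inj : injective gmap.
Proof.
move=> [y1 z1] [y2 z2] e; congr (_, _); apply/mpolyP => mo.
  by rewrite -(gmap_coef1 (y1, z1)) -(gmap_coef1 (y2, z2)) e.
by rewrite -(gmap_coef2 (y1, z1)) -(gmap_coef2 (y2, z2)) e.
Qed.

Lemma gmapD a b : gmap (a.1 + b.1, a.2 + b.2) = gmap a + gmap b.
Proof. by rewrite /gmap /= mwidenD mulrDr addrACA. Qed.

Lemma gmapZ (c : F2) a : gmap (c *: a.1, c *: a.2) = c *: gmap a.
Proof. by rewrite /gmap /= mwidenZ scalerDr scalerAr. Qed.

Lemma gmapD' y1 z1 y2 z2 : gmap (y1 + y2, z1 + z2) = gmap (y1, z1) + gmap (y2, z2).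
Proof. exact: (gmapD (y1, z1) (y2, z2)). Qed.

Lemma gmapZ' (c : F2) y z : gmap (c *: y, c *: z) = c *: gmap (y, z).
Proof. exact: (gmapZ c (y, z)). Qed.

Lemma gmap_surj x : exists yz, gmap yz = x.
Proof.
elim/mpolyind: x => [|c mo q _ _ [[y z] IH]].
  by exists (0, 0); rewrite /gmap /= mwiden0 mulr0 addr0.
have [h0|hn] := eqVneq (mo top) 0%N.
  pose mo' := [multinom mo (widen_ord (leqnSn p) i) | i < p].
  have emo : mnmwiden mo' = mo.
    apply/mnmP => i; case: (ltnP i p) => hi.
      have -> : i = widen_ord (leqnSn p) (Ordinal hi) by apply: val_inj.
      by rewrite mnmwiden_widen mnmE.
    have -> : i = top by apply: val_inj => /=; move: (ltn_ord i); lia.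
    by rewrite mnmwiden_ordmax h0.
  exists (c *: 'X_[mo'] + y, z).
  by rewrite -IH /gmap /= mwidenD mwidenZ mwidenX emo addrA.
have hle : (U_(top) <= mo)%MM.
  apply/mnm_lepP => i; rewrite mnm1E; case: eqP => [<-|] //; by rewrite lt0n.
exists (y, c *: 'X_[mo - U_(top)] + z).
rewrite -IH /gmap /= mulrDr addrCA -scalerAr.
by rewrite -mpolyXD addmC submK.
Qed.

End Decomp.

Lemma wdeg_widen p (mo : 'X_{1..p}) : wdeg p.+2 (mnmwiden mo) = wdeg p.+1 mo.
Proof.
rewrite /wdeg big_ord_recr /= mnmwiden_ordmax muln0 addn0.
by apply: eq_bigr => i _; rewrite mnmwiden_widen.
Qed.

Lemma wdeg_top p (mo : 'X_{1..p.+1}) : wdeg p.+2 (U_(ord_max) + mo)%MM = (p.+2 + wdeg p.+2 mo)%N.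
Proof.
rewrite /wdeg; under eq_bigr do rewrite mnmDE mulnDr.
rewrite big_split /=; congr (_ + _)%N.
rewrite (bigD1 ord_max) //= mnm1E eqxx muln1 big1 ?addn0 ?addn2 // => i /negbTE h.
by rewrite mnm1E eq_sym h muln0.
Qed.

Lemma Q1E m (x : {mpoly F2[m.-1]}) : Q1 m x = Q1l m x.
Proof. by rewrite /Q1 /Q1l !SlE. Qed.

Lemma Q1l_top p (z : {mpoly F2[p.+1]}) : Q1l p.+2 ('X_ord_max * z) = 'X_ord_max * Q1Thom p.+2 z.
Proof. by rewrite /Q1l /Q1Thom !Sl_top mulrDr. Qed.


Lemma gen (p : nat) (hp : ~~ odd p) (hp2 : (2 <= p)%N) :
  exists f : {mpoly F2[p.+1]} -> {mpoly F2[p]} * {mpoly F2[p.+1]},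
        (forall (a : F2) x y, f (a *: x + y) = (a *: (f x).1 + (f y).1, a *: (f x).2 + (f y).2)) /\
        (forall x, reducedBSO p.+2 x -> reducedBSO p.+1 (f x).1) /\
        (forall x y, reducedBSO p.+2 x -> reducedBSO p.+2 y -> f x = f y -> x = y) /\
        (forall y z, reducedBSO p.+1 y ->
           exists2 x, reducedBSO p.+2 x & f x = (y, z)) /\
        (forall d x, reducedBSO p.+2 x -> homogBSO p.+2 d x ->
           homogBSO p.+1 d (f x).1 /\ homogThom p.+2 d (f x).2) /\
        (forall x, reducedBSO p.+2 x ->
           f (Q0 p.+2 x) = (Q0 p.+1 (f x).1, Q0Thom p.+2 (f x).2)) /\
        (forall x, reducedBSO p.+2 x ->
           f (Q1 p.+2 x) = (Q1 p.+1 (f x).1, Q1Thom p.+2 (f x).2)).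
Proof.
have hs : forall x, exists yz, gmap p yz == x.
  by move=> x; have [yz e] := gmap_surj p x; exists yz; apply/eqP.
pose f := fun x => xchoose (hs x).
have fK : forall x, gmap p (f x) = x := fun x => eqP (xchooseP (hs x)).
have gK : forall yz, f (gmap p yz) = yz := fun yz => @gmap_inj p _ _ (fK (gmap p yz)).
exists f; split.
  move=> a x y; apply: (@gmap_inj p).
  by rewrite fK gmapD' gmapZ' -!surjective_pairing !fK.
split.
  move=> x hx; have := @gmap_coef1 p (f x) 0%MM; rewrite fK mnmwiden0 => e; exact: (etrans (esym e) hx).
split.
  by move=> x y _ _ e; rewrite -(fK x) -(fK y) e.
split.
  move=> y z hy; exists (gmap p (y, z)); last exact: gK.
  by have := @gmap_coef1 p (y, z) 0%MM; rewrite mnmwiden0 => e; exact: (etrans e hy).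
split.
  move=> d x _ hx; split.
    move=> mo; rewrite mcoeff_msupp -(@gmap_coef1 p (f x)) fK -mcoeff_msupp => /hx.
    by rewrite wdeg_widen.
  move=> mo; rewrite mcoeff_msupp -(@gmap_coef2 p (f x)) fK -mcoeff_msupp => /hx.
  by rewrite wdeg_top.
split.
  move=> x _; have := fK x; case: (f x) => y z /= <-.
  rewrite /Q0 /Q0Thom !SlE /gmap /= SqD Sl_top (mwidenQ0 p hp hp2).
  exact: (gK (Sl p.+1 1 y, SqThom p.+2 1 z)).
move=> x _; have := fK x; case: (f x) => y z /= <-.
rewrite !Q1E /gmap /= Q1lD Q1l_top (mwidenQ1 p hp hp2).
exact: (gK (Q1l p.+1 y, Q1Thom p.+2 z)).
Qed.

Theorem lemma2 (n : nat) (hn : (2 <= n)%N) :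
  exists f : {mpoly F2[(2 * n).-1]} ->
             {mpoly F2[(2 * n - 1).-1]} * {mpoly F2[(2 * n).-1]},
    (* F2-linear *)
        (forall (a : F2) x y, f (a *: x + y) = (a *: (f x).1 + (f y).1, a *: (f x).2 + (f y).2)) /\
        (* maps reduced classes to (reduced, anything) *)
        (forall x, reducedBSO (2 * n) x -> reducedBSO (2 * n - 1) (f x).1) /\
        (* injective on reduced classes *)
        (forall x y, reducedBSO (2 * n) x -> reducedBSO (2 * n) y -> f x = f y -> x = y) /\
        (* surjective onto ~H(BSO(2n-1)) (+) ~H(MSO_2n) *)
        (forall y z, reducedBSO (2 * n - 1) y ->
           exists2 x, reducedBSO (2 * n) x & f x = (y, z)) /\
        (* degree preserving *)
        (forall d x, reducedBSO (2 * n) x -> homogBSO (2 * n) d x ->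
           homogBSO (2 * n - 1) d (f x).1 /\ homogThom (2 * n) d (f x).2) /\
        (* commutes with Q0 *)
        (forall x, reducedBSO (2 * n) x ->
           f (Q0 (2 * n) x) = (Q0 (2 * n - 1) (f x).1, Q0Thom (2 * n) (f x).2)) /\
        (* commutes with Q1 *)
        (forall x, reducedBSO (2 * n) x ->
           f (Q1 (2 * n) x) = (Q1 (2 * n - 1) (f x).1, Q1Thom (2 * n) (f x).2)).
Proof.
have [p hp [hp2 E]] : exists2 p, ~~ odd p & (2 <= p)%N /\ (2 * n = p.+2)%N.
  exists (2 * n - 2)%N; last by split; lia.
  by rewrite oddB ?oddM ?andFb //; lia.
rewrite E subSS subn0.
exact: (gen p hp hp2).
Qed.
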